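(* Let $P\subseteq\mathbb{P}^{n-1}$ be a full-dimensional polytope and fix $1\le k\le n$. Then $P^{[k]}=\mathrm{cl}(P^{[k]}_{\max})$, the closure being taken in $\mathrm{Gr}(k,n)$.
   Context: Work over $\mathbb{R}$. $\mathrm{Gr}(k,n)$ is the Grassmannian of $k$-dimensional linear subspaces of $\mathbb{R}^n$; subspaces are identified with their images in $\mathbb{P}^{n-1}$. A polytope $P\subseteq\mathbb{P}^{n-1}$ is the image in $\mathbb{P}^{n-1}$ of a cone $\{\sum c_iv_i: c_i\ge0\}$ over finitely many $v_i\in\mathbb{R}^n$ (projectivization of the cone over a polytope in an affine hyperplane not through the origin); faces and dimensions are those of the underlying polytope. $P^{[k]}=\{V\in\mathrm{Gr}(k,n)\mid V\cap P\ne\emptyset\}$ and $P^{[k]}_{\max}=\{V\in P^{[k]}\mid V\cap G=\emptyset$ for every face $G$ of $P$ with $\dim G<n-k\}$. *)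

(* Defs.v *)
From HB Require Import structures.
From mathcomp Require Import all_boot all_order all_algebra.
From mathcomp Require Import reals.
Set Implicit Arguments. Unset Strict Implicit. Unset Printing Implicit Defensive.
Import Order.TTheory GRing.Theory Num.Theory.
Local Open Scope ring_scope.

(* A polytope P in P^{n-1} is given by
   finitely many generators v_1..v_m, the rows of G : 'M[R]_(m,n); its cone is
   { sum c_i v_i | c_i >= 0 }, and a point of P is a nonzero vector of the cone
   (up to scaling). *)

Definition in_cone (R : realType) (m n : nat) (G : 'M[R]_(m, n)) (x : 'rV[R]_n) : Prop :=
  exists c : 'rV[R]_m, (forall i, 0 <= c 0 i) /\ x = c *m G.

(* The cone is the cone over a polytope in an affine hyperplane not through 0:
   some linear functional l is positive on all generators. *)
Definition pointed_gens (R : realType) (m n : nat) (G : 'M[R]_(m, n)) : Prop :=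
  exists l : 'cV[R]_n, forall i, 0 < (row i G *m l) 0 0.

(* P is full-dimensional (dim P = n-1): the generators span R^n. *)
Definition full_dim (R : realType) (m n : nat) (G : 'M[R]_(m, n)) : Prop :=
  \rank G = n.

(* Faces of P: w is a supporting functional of the cone (w >= 0 on the cone);
   the corresponding face of the cone is cone ∩ {w = 0}.  Every face of the
   polytope (including the empty face and P itself) arises this way. *)
Definition supporting (R : realType) (m n : nat) (G : 'M[R]_(m, n)) (w : 'cV[R]_n) : Prop :=
  forall i, 0 <= (row i G *m w) 0 0.

Definition in_face (R : realType) (m n : nat) (G : 'M[R]_(m, n)) (w : 'cV[R]_n)
  (x : 'rV[R]_n) : Prop :=
  in_cone G x /\ (x *m w) 0 0 = 0.

(* Since the face G of P is the projectivization
   of this cone face, dim G = (linear dim of cone face) - 1. *)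
Definition face_cone_dim_le (R : realType) (m n : nat) (G : 'M[R]_(m, n)) (w : 'cV[R]_n)
  (d : nat) : Prop :=
  forall r (A : 'M[R]_(r, n)), row_free A -> (forall i, in_face G w (row i A)) -> (r <= d)%N.

(* Points of Gr(k,n) are row spaces of full-rank k x n matrices. *)

Definition Pk (R : realType) (m n k : nat) (G : 'M[R]_(m, n)) (A : 'M[R]_(k, n)) : Prop :=
  exists x : 'rV[R]_n, x != 0 /\ in_cone G x /\ (x <= A)%MS.

(* V ∈ P^[k] and V misses every face G of P with dim G < n-k,
   i.e. with (linear dim of the cone face) <= n-k. *)
Definition Pk_max (R : realType) (m n k : nat) (G : 'M[R]_(m, n)) (A : 'M[R]_(k, n)) : Prop :=
  Pk G A /\
  forall w : 'cV[R]_n, supporting G w -> face_cone_dim_le G w (n - k) ->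
    ~ (exists x : 'rV[R]_n, x != 0 /\ in_face G w x /\ (x <= A)%MS).

(* Closure in Gr(k,n): Gr(k,n) carries the quotient topology of the (open) set of
   full-rank k x n matrices; the quotient map is open, so the row space of a
   full-rank A lies in the closure of S iff A is a limit of full-rank matrices
   whose row spaces lie in S. *)
Definition Gr_closure (R : realType) (k n : nat) (S : 'M[R]_(k, n) -> Prop)
  (A : 'M[R]_(k, n)) : Prop :=
  forall e : R, 0 < e ->
    exists B : 'M[R]_(k, n), row_free B /\ S B /\ forall i j, `|A i j - B i j| < e.

(* Main.v *)
Require Import Defs.
From HB Require Import structures.
From mathcomp Require Import all_boot all_order all_algebra.
From mathcomp Require Import reals.
From mathcomp Require Import ring lra zify.
Import Order.TTheory GRing.Theory Num.Theory.
Local Open Scope ring_scope.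

Set Implicit Arguments. Unset Strict Implicit. Unset Printing Implicit Defensive.

Section SNorm.
Variable R : realFieldType.

Definition Sn m n (X : 'M[R]_(m, n)) : R := \sum_i \sum_j `|X i j|.

Lemma Sn_ge0 m n (X : 'M[R]_(m, n)) : 0 <= Sn X.
Proof. by apply: sumr_ge0 => i _; apply: sumr_ge0 => j _. Qed.

Lemma Sn_entry m n (X : 'M[R]_(m, n)) i j : `|X i j| <= Sn X.
Proof.
rewrite /Sn (bigD1 i) //= (bigD1 j) //= -addrA lerDl.
by apply: addr_ge0; [apply: sumr_ge0 => ? _ | apply: sumr_ge0 => ? _; apply: sumr_ge0].
Qed.

Lemma Sn_row m n (X : 'M[R]_(m, n)) i : \sum_j `|X i j| <= Sn X.
Proof.
rewrite /Sn (bigD1 i) //= lerDl.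
by apply: sumr_ge0 => ? _; apply: sumr_ge0.
Qed.

Lemma Sn_add m n (X Y : 'M[R]_(m, n)) : Sn (X + Y) <= Sn X + Sn Y.
Proof.
rewrite /Sn -big_split /=; apply: ler_sum => i _.
rewrite -big_split /=; apply: ler_sum => j _; rewrite mxE; exact: ler_normD.
Qed.

Lemma Sn_opp m n (X : 'M[R]_(m, n)) : Sn (- X) = Sn X.
Proof. by apply: eq_bigr => i _; apply: eq_bigr => j _; rewrite mxE normrN. Qed.

Lemma Sn_sub m n (X Y : 'M[R]_(m, n)) : Sn (X - Y) = Sn (Y - X).
Proof. by rewrite -Sn_opp opprB. Qed.

Lemma Sn_scale m n a (X : 'M[R]_(m, n)) : Sn (a *: X) = `|a| * Sn X.
Proof.
rewrite /Sn mulr_sumr; apply: eq_bigr => i _; rewrite mulr_sumr.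
by apply: eq_bigr => j _; rewrite mxE normrM.
Qed.

Lemma Sn_mul m n p (X : 'M[R]_(m, n)) (Y : 'M[R]_(n, p)) :
  Sn (X *m Y) <= Sn X * Sn Y.
Proof.
rewrite /Sn mulr_suml; apply: ler_sum => i _.
apply: (@le_trans _ _ (\sum_j \sum_l `|X i l| * `|Y l j|)).
  apply: ler_sum => j _; rewrite mxE.
  apply: (le_trans (ler_norm_sum _ _ _)); apply: ler_sum => l _.
  by rewrite normrM.
rewrite exchange_big /= mulr_suml; apply: ler_sum => l _.
rewrite -mulr_sumr; apply: ler_wpM2l => //.
exact: (Sn_row Y l).
Qed.

Lemma Sn_bound m n (X : 'M[R]_(m, n)) (e : R) :
  (forall i j, `|X i j| <= e) -> Sn X <= (m * n)%:R * e.
Proof.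
move=> H; rewrite /Sn.
apply: (@le_trans _ _ (\sum_(i < m) \sum_(j < n) e)).
  by apply: ler_sum => i _; apply: ler_sum => j _.
by rewrite sumr_const sumr_const !card_ord mulr_natl -mulrnA mulnC.
Qed.

Lemma Sn_col_mx m1 m2 n (X : 'M[R]_(m1, n)) (Y : 'M[R]_(m2, n)) :
  Sn (col_mx X Y) = Sn X + Sn Y.
Proof.
rewrite /Sn big_split_ord /=; congr (_ + _); apply: eq_bigr => i _;
  apply: eq_bigr => j _; by rewrite ?col_mxEu ?col_mxEd.
Qed.

End SNorm.

Section Gordan.
Variable R : realFieldType.

Lemma below_seq (us : seq R) : exists z, forall u, u \in us -> z < u.
Proof.
elim: us => [|u us [z Hz]]; first by exists 0.
exists (Num.min z (u - 1)) => v; rewrite inE => /orP [/eqP->|/Hz].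
  by rewrite gt_min ltrBlDr ltrDl ltr01 orbT.
by move=> hv; rewrite gt_min hv.
Qed.

Lemma between1 (l : R) (us : seq R) : (forall u, u \in us -> l < u) ->
  exists z, l < z /\ forall u, u \in us -> z < u.
Proof.
elim: us => [|u us IH] H; first by exists (l + 1); split => //; rewrite ltrDl ltr01.
have [z [lz Hz]] : exists z, l < z /\ forall v, v \in us -> z < v.
  by apply: IH => v hv; apply: H; rewrite inE hv orbT.
have lu : l < u by apply: H; rewrite inE eqxx.
exists (Num.min z ((l + u) / 2)); split.
  rewrite lt_min lz /=; lra.
move=> v; rewrite inE => /orP [/eqP->|hv].
  rewrite gt_min; apply/orP; right; lra.
by rewrite gt_min Hz.
Qed.

Lemma between_seq (ls us : seq R) :
  (forall l u, l \in ls -> u \in us -> l < u) ->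
  exists z, (forall l, l \in ls -> l < z) /\ (forall u, u \in us -> z < u).
Proof.
elim: ls => [|l ls IH] H.
  by have [z Hz] := below_seq us; exists z; split.
have [z [H1 H2]] : exists z, (forall l', l' \in ls -> l' < z) /\ (forall u, u \in us -> z < u).
  by apply: IH => l' u hl hu; apply: H => //; rewrite inE hl orbT.
case: (ltP l z) => hlz.
  by exists z; split => // l'; rewrite inE => /orP [/eqP->|/H1].
have [z' [lz' Hz']] := between1 (l := l) (us := us) (fun u hu => H l u (mem_head _ _) hu).
exists z'; split => // l'; rewrite inE => /orP [/eqP->//|/H1 h].
lra.
Qed.

Lemma between_fin (I : finType) (P Q : pred I) (L U : I -> R) :
  (forall p q, P p -> Q q -> L p < U q) ->
  exists z, (forall p, P p -> L p < z) /\ (forall q, Q q -> z < U q).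
Proof.
move=> H.
have [z [H1 H2]] := @between_seq [seq L p | p <- enum I & P p] [seq U q | q <- enum I & Q q]
  (fun l u hl hu => ltac:(case/mapP: hl => p; rewrite mem_filter => /andP [hp _] ->;
                           case/mapP: hu => q; rewrite mem_filter => /andP [hq _] ->;
                           exact: H)).
exists z; split.
  by move=> p hp; apply: H1; apply: map_f; rewrite mem_filter hp mem_enum.
by move=> q hq; apply: H2; apply: map_f; rewrite mem_filter hq mem_enum.
Qed.

Definition dot n (u v : 'rV[R]_n) : R := (u *m v^T) 0 0.

Lemma dotD n (u v z : 'rV[R]_n) : dot (u + v) z = dot u z + dot v z.
Proof. by rewrite /dot mulmxDl mxE. Qed.

Lemma dotZ n a (u z : 'rV[R]_n) : dot (a *: u) z = a * dot u z.
Proof. by rewrite /dot -scalemxAl mxE. Qed.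

Lemma dot_row_mx n (u : 'rV[R]_(1 + n)) (z0 : R) (z : 'rV[R]_n) :
  dot u (row_mx z0%:M z) = (lsubmx u) 0 0 * z0 + dot (rsubmx u) z.
Proof.
rewrite /dot -{1}(hsubmxK u) tr_row_mx mul_row_col mxE; congr (_ + _).
by rewrite mxE big_ord1 !mxE eqxx mulr1n.
Qed.

Lemma sum_delta (I : finType) n (h : I -> 'rV[R]_n) j :
  \sum_i ((j == i)%:R : R) *: h i = h j.
Proof.
rewrite (bigD1 j) //= eqxx scale1r big1 ?addr0 // => i /negbTE.
by rewrite eq_sym => ->; rewrite scale0r.
Qed.

Lemma sum_row_mx0 (I : finType) n (f : I -> 'rV[R]_n) :
  \sum_i row_mx (0 : 'rV[R]_1) (f i) = row_mx 0 (\sum_i f i).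
Proof.
elim/big_rec2: _ => [|i A B _ ->]; first by rewrite row_mx0.
by rewrite add_row_mx addr0.
Qed.

Lemma comb_row_mx n (x y : R) (A B : 'rV[R]_1) (C D : 'rV[R]_n) :
  x *: row_mx A C + y *: row_mx B D = row_mx (x *: A + y *: B) (x *: C + y *: D).
Proof. by rewrite !scale_row_mx add_row_mx. Qed.

Lemma scale_row_mx0 n (x : R) (C : 'rV[R]_n) :
  x *: row_mx (0 : 'rV[R]_1) C = row_mx 0 (x *: C).
Proof. by rewrite scale_row_mx scaler0. Qed.

Theorem gordan n : forall (I : finType) (h : I -> 'rV[R]_n),
  (exists z : 'rV_n, forall i, 0 < dot (h i) z) \/
  (exists c : I -> R, (forall i, 0 <= c i) /\ (exists i, 0 < c i) /\
      \sum_i c i *: h i = 0).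
Proof.
elim: n => [|n IH] I h.
  case: (pickP (fun _ : I => true)) => [i _|H]; last by left; exists 0 => i; have := H i.
  right; exists (fun j => ((i == j)%:R : R)); split; first by move=> j; rewrite ler0n.
  split; first by exists i; rewrite eqxx ltr01.
  by rewrite sum_delta; apply/rowP => -[].
pose a i := (lsubmx (h i : 'rV_(1 + n))) 0 0.
pose r i := rsubmx (h i : 'rV_(1 + n)).
pose I' := ({i : I | a i == 0} + {pq : I * I | (0 < a pq.1) && (a pq.2 < 0)})%type.
pose h' (x : I') : 'rV_n := match x with
  | inl i => r (val i)
  | inr pq => (- a (val pq).2) *: r (val pq).1 + a (val pq).1 *: r (val pq).2 end.
case: (IH I' h') => [[z' Hz']|[c' [c'ge [[x0 cx0] c'sum]]]].
  left.
  pose L p := - dot (r p) z' / a p.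
  pose U q := dot (r q) z' / (- a q).
  have [z0 [HL HU]] := @between_fin I (fun p => 0 < a p) (fun q => a q < 0) L U
     (fun p q hp hq => ltac:(
        have := Hz' (inr (exist _ (p, q) (introT andP (conj hp hq))));
        rewrite /h' /= dotD !dotZ => hpos;
        rewrite /L /U ltr_pdivrMr // mulrAC ltr_pdivlMr ?oppr_gt0 //; lra)).
  exists (row_mx z0%:M z') => i.
  rewrite dot_row_mx -/(a i) -/(r i).
  case: (ltgtP (a i) 0) => hai.
  - have := HU i hai; rewrite /U ltr_pdivlMr ?oppr_gt0 //; lra.
  - have := HL i hai; rewrite /L ltr_pdivrMr //; lra.
  - by rewrite hai mul0r add0r; have := Hz' (inl (exist _ i (introT eqP hai))).
right.
pose coef (x : I') (i : I) : R := match x with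
  | inl j => ((val j == i)%:R)
  | inr pq => ((val pq).1 == i)%:R * (- a (val pq).2) + ((val pq).2 == i)%:R * a (val pq).1 end.
have coef_ge0 x i : 0 <= coef x i.
  case: x => [j|[[p q] /= /andP [hp hq]]] /=; first by rewrite ler0n.
  by apply: addr_ge0; apply: mulr_ge0; rewrite ?ler0n ?oppr_ge0 ?ltW.
exists (fun i => \sum_x c' x * coef x i); split.
  by move=> i; apply: sumr_ge0 => x _; apply: mulr_ge0.
split.
  have key : forall i, c' x0 * coef x0 i <= \sum_x c' x * coef x i.
    move=> i; rewrite (bigD1 x0) //= lerDl; apply: sumr_ge0 => x _.
    exact: mulr_ge0.
  case: x0 cx0 key => [j|[[p q] /= hpq]] cx0 key.
    exists (val j); apply: lt_le_trans (key _); rewrite /= eqxx mulr1 //.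
  exists p; apply: lt_le_trans (key _); rewrite /= eqxx mul1r.
  case/andP: (hpq) => hp hq; apply: mulr_gt0 => //.
  apply: ltr_wpDr; first by apply: mulr_ge0; rewrite ?ler0n ?ltW.
  by rewrite oppr_gt0.
under eq_bigr => i _ do rewrite scaler_suml.
rewrite exchange_big /=.
have HH x : \sum_i (c' x * coef x i) *: h i = c' x *: (row_mx (0 : 'rV[R]_1) (h' x) : 'rV_(n.+1)).
  under eq_bigr => i _ do rewrite -scalerA.
  rewrite -scaler_sumr; congr (_ *: _).
  case: x => [[j /= /eqP hj]|[[p q] /= /andP [hp hq]]] /=.
    rewrite sum_delta -[h j](hsubmxK (h j : 'rV_(1 + n))).
    rewrite (_ : lsubmx (h j : 'rV_(1 + n)) = 0) //.
    by apply/matrixP => u v; rewrite !ord1 [RHS]mxE; exact: hj.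
  under eq_bigr => i _ do rewrite scalerDl -!scalerA.
  rewrite big_split /= (sum_delta (fun i => - a q *: h i)) (sum_delta (fun i => a p *: h i)).
  rewrite -[h p](hsubmxK (h p : 'rV_(1 + n))) -[h q](hsubmxK (h q : 'rV_(1 + n))).
  rewrite comb_row_mx.
  rewrite (_ : - a q *: lsubmx (h p : 'rV_(1 + n)) + a p *: lsubmx (h q : 'rV_(1 + n)) = 0) //.
  apply/matrixP => u v; rewrite !ord1 !mxE.
  have e1 : a p = h p 0 (lshift n (0 : 'I_1)) by rewrite /a mxE.
  have e2 : a q = h q 0 (lshift n (0 : 'I_1)) by rewrite /a mxE.
  rewrite -e1 -e2; lra.
under eq_bigr => x _ do rewrite HH scale_row_mx0.
by rewrite sum_row_mx0 c'sum row_mx0.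
Qed.

Theorem gordan_mx m n (H : 'M[R]_(m, n)) :
  (exists z : 'cV_n, forall i, 0 < (H *m z) i 0) \/
  (exists c : 'rV_m, (forall i, 0 <= c 0 i) /\ c != 0 /\ c *m H = 0).
Proof.
case: (gordan (fun i : 'I_m => row i H)) => [[z Hz]|[c [cge [[i ci] cs]]]].
  left; exists z^T => i; have := Hz i.
  rewrite /dot !mxE; congr (0 < _); apply: eq_bigr => j _; rewrite !mxE.
  done.
right; exists (\row_i c i); split; first by move=> j; rewrite mxE.
split.
  apply/eqP => /matrixP /(_ 0 i); rewrite !mxE => c0.
  by move: ci; rewrite c0 ltxx.
rewrite mulmx_sum_row -[RHS]cs; apply: eq_bigr => j _; by rewrite mxE.
Qed.

End Gordan.

Section Avoid.
Variable R : realFieldType.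

Lemma rank_adds_row m n (X : 'M[R]_(m, n)) (v : 'rV[R]_n) :
  ~~ (v <= X)%MS -> \rank (X + v)%MS = (\rank X).+1.
Proof.
move=> hv.
have v0 : v != 0 by apply: contra hv => /eqP ->; rewrite sub0mx.
have := mxrank_sum_cap X v; rewrite rank_rV v0 /=.
have -> : \rank (X :&: v)%MS = 0%N.
  have := mxrank_leqif_sup (capmxSr X v); rewrite rank_rV v0.
  case=> hle heq; apply/eqP; rewrite -leqn0 -ltnS.
  rewrite ltn_neqAle hle andbT heq; apply: contra hv => hv'.
  exact: submx_trans hv' (capmxSl _ _).
by rewrite addn0 addn1.
Qed.

Lemma exists_nonroot (Q : {poly R}) (d : R) : Q != 0 -> 0 < d ->
  exists s, 0 < s /\ s < d /\ ~~ root Q s.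
Proof.
move=> hQ hd.
pose rs := [seq d / (i.+2)%:R | i <- iota 0 (size Q)].
have hrs : forall s, s \in rs -> 0 < s /\ s < d.
  move=> s /mapP [i _ ->]; split; first by apply: divr_gt0 => //; rewrite ltr0n.
  rewrite ltr_pdivrMr ?ltr0n // ltr_pMr // ltr1n //.
have urs : uniq rs.
  rewrite map_inj_uniq ?iota_uniq // => i j /= hij.
  have h2 : forall k : nat, ((k.+2)%:R : R) != 0 by move=> k; rewrite pnatr_eq0.
  have : ((i.+2)%:R : R)^-1 = (j.+2)%:R^-1.
    by apply: (mulfI (lt0r_neq0 hd)).
  by move=> hh; have := invr_inj hh; move/eqP; rewrite eqr_nat !eqSS => /eqP.
have : ~~ all (root Q) rs.
  apply/negP => hall; have := max_poly_roots hQ hall urs.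
  by rewrite size_map size_iota ltnn.
case/allPn => s hs hr; have [h1 h2] := hrs s hs.
by exists s.
Qed.

Lemma avoid n (J : finType) (P : pred J) (U : J -> 'M[R]_n) (a : 'rV[R]_n) (e : R) :
  (forall j, P j -> (\rank (U j) < n)%N) -> 0 < e ->
  exists v : 'rV_n, Sn (v - a) < e /\ forall j, P j -> ~~ (v <= U j)%MS.
Proof.
case: n U a => [|n] U a hU he.
  exists a; rewrite subrr; split.
    by rewrite (_ : Sn _ = 0) // /Sn big1 // => i _; rewrite big1 // => ? _; rewrite mxE normr0.
  by move=> j /hU.
pose K j := cokermx (U j).
pose q j l : {poly R} := ((\sum_i a 0 i * K j i l)%:P + 'X * \poly_(i < n.+1) (K j (inord i) l)).
have hq : forall j l s, (q j l).[s] = \sum_i a 0 i * K j i l + s * \sum_(i < n.+1) K j i l * s ^+ i.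
  move=> j l s; rewrite /q hornerD hornerC hornerM hornerX horner_poly.
  congr (_ + _ * _); apply: eq_bigr => i _; by rewrite inord_val.
have qnz : forall j l, (exists i, K j i l != 0) -> q j l != 0.
  move=> j l [i hi]; apply/eqP => /(congr1 (fun p : {poly R} => p`_(i.+1))).
  rewrite coefD coefC /= coefXM /= coef_poly ltn_ord inord_val coef0 add0r.
  by move/eqP; rewrite (negbTE hi).
pose Q := \prod_(j | P j) \prod_(l | [exists i, K j i l != 0]) q j l.
have hQ : Q != 0.
  apply/prodf_neq0 => j _; apply/prodf_neq0 => l /existsP [i hi].
  by apply: qnz; exists i.
pose d := Num.min 1 (e / (n.+1%:R + 1)).
have hd : 0 < d by rewrite lt_min ltr01 /= divr_gt0 // ltr_wpDl ?ler0n.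
have [s [s0 [sd hr]]] := exists_nonroot hQ hd.
have s1 : s < 1 by move: sd; rewrite lt_min => /andP [].
have se : s * (n.+1%:R + 1) < e.
  by move: sd; rewrite lt_min => /andP [_]; rewrite ltr_pdivlMr // ltr_wpDl ?ler0n.
pose mom : 'rV[R]_n.+1 := \row_i s ^+ i.
exists (a + s *: mom); split.
  rewrite addrC addKr Sn_scale ger0_norm ?ltW //.
  apply: le_lt_trans se; apply: ler_wpM2l; first exact: ltW.
  apply: (le_trans (Sn_bound (e := 1) _)).
    move=> i j; rewrite mxE ger0_norm; last by apply: exprn_ge0; apply: ltW.
    by apply: exprn_ile1; [apply: ltW|apply: ltW].
  by rewrite mul1n mulr1 lerDl ler01.
move=> j hj; rewrite submxE; apply/negP => /eqP hv.
have : K j != 0.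
  apply/negP => /eqP hK; have := mxrank_coker (U j); rewrite -/(K j) hK mxrank0.
  by move/esym/eqP; rewrite subn_eq0 leqNgt hU.
move=> Knz.
case: (boolP [exists i, exists l, K j i l != 0]) => [/existsP [i /existsP [l hil]] | hno]; last first.
  apply: (negP Knz); apply/eqP/matrixP => i l.
  move: hno; rewrite negb_exists => /forallP /(_ i); rewrite negb_exists => /forallP /(_ l).
  by rewrite negbK [RHS]mxE => /eqP.
move: hr; rewrite /root /Q horner_prod => /prodf_neq0 /(_ j hj).
rewrite horner_prod => /prodf_neq0 /(_ l (introT existsP (ex_intro _ i hil))).
rewrite hq; apply/negP; rewrite negbK; apply/eqP.
transitivity (((a + s *: mom) *m K j) 0 l); last by rewrite /K hv mxE.
rewrite mxE mulr_sumr -big_split; apply: eq_bigr => k _.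
have -> : (a + s *: mom) 0 k = a 0 k + s * s ^+ k by rewrite !mxE.
by rewrite mulrDl -mulrA [s ^+ k * _]mulrC.
Qed.

Lemma Sn_col_split m1 m2 n (X : 'M[R]_(m1, n)) (Y : 'M[R]_(m2, n)) (C : 'M[R]_(m1 + m2, n)) :
  Sn (col_mx X Y - C) = Sn (X - usubmx C) + Sn (Y - dsubmx C).
Proof. by rewrite -{1}(vsubmxK C) opp_col_mx add_col_mx Sn_col_mx. Qed.

Lemma trans_gen n (J : finType) (P : pred J) (U : J -> 'M[R]_n) r :
  (forall j, P j -> (\rank (U j) + r <= n)%N) ->
  forall (C : 'M[R]_(r, n)) (e : R), 0 < e ->
  exists D : 'M[R]_(r, n), Sn (D - C) < e /\
    forall j, P j -> \rank (U j + D)%MS = (\rank (U j) + r)%N.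
Proof.
elim: r => [|r IH] hU C e he.
  exists C; rewrite subrr; split.
    by rewrite (_ : Sn _ = 0) // /Sn big1 // => i _; rewrite big1 // => ? _; rewrite mxE normr0.
  move=> j _; have -> : C = 0 by apply/matrixP => -[].
  by rewrite addsmx0 addn0.
have hU' : forall j, P j -> (\rank (U j) + r <= n)%N.
  by move=> j /hU; rewrite addnS => /ltnW.
have he2 : 0 < e / 2 by rewrite divr_gt0.
have [D1 [hD1 rD1]] := IH hU' (dsubmx (C : 'M_(1 + r, n))) (e / 2) he2.
have [v [hv vnot]] := @avoid n J P (fun j => (U j + D1)%MS) (usubmx (C : 'M_(1 + r, n))) (e / 2)
  (fun j hj => ltac:(rewrite rD1 //; have := hU j hj; by rewrite addnS)) he2.
exists (col_mx v D1 : 'M_(1 + r, n)); split.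
  rewrite (Sn_col_split v D1 (C : 'M_(1 + r, n))).
  by rewrite [e]splitr; apply: ltrD.
move=> j hj.
have E : (U j + col_mx v D1 :=: (U j + D1) + v)%MS.
  apply: eqmx_trans (adds_eqmx (eqmx_refl (U j)) (eqmx_sym (addsmxE v D1))) _.
  by rewrite -addsmxA [(D1 + v)%MS]addsmxC.
by rewrite E rank_adds_row ?vnot // rD1 // addnS.
Qed.

End Avoid.

Section Main.
Variable R : realType.

Lemma pos_lb (I : finType) (f : I -> R) : (forall i, 0 < f i) ->
  exists mu, 0 < mu /\ forall i, mu <= f i.
Proof.
move=> hf.
have [z [H1 H2]] := @between_seq R [:: 0] [seq f i | i <- enum I]
  (fun l u hl hu => ltac:(move: hl; rewrite inE => /eqP ->; case/mapP: hu => i _ ->; exact: hf)).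
exists z; split; first by apply: H1; rewrite inE.
by move=> i; apply/ltW/H2/map_f; rewrite mem_enum.
Qed.

Lemma small_pos (X Y : R) : 0 <= X -> 0 < Y -> exists e, 0 < e /\ e * X < Y.
Proof.
move=> hX hY; exists (Y / (X + 1)); split; first by rewrite divr_gt0 // ltr_wpDl.
rewrite mulrAC ltr_pdivrMr ?ltr_wpDl //; rewrite ltr_pM2l //; lra.
Qed.

Lemma rowGl m n (G : 'M[R]_(m, n)) (l : 'cV[R]_n) i :
  (row i G *m l) 0 0 = (G *m l) i 0.
Proof. by rewrite !mxE; apply: eq_bigr => j _; rewrite mxE. Qed.

Lemma cone_sum m n (G : 'M[R]_(m, n)) (c : 'rV[R]_m) (l : 'cV[R]_n) :
  (c *m G *m l) 0 0 = \sum_i c 0 i * (G *m l) i 0.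
Proof. by rewrite -mulmxA mxE. Qed.

Lemma nz_entry m n (c : 'M[R]_(m, n)) : c != 0 -> exists i j, c i j != 0.
Proof.
move=> hc; case: (boolP [exists i, exists j, c i j != 0]) => [/existsP [i /existsP [j h]]|hno].
  by exists i, j.
case/eqP: hc; apply/matrixP => i j.
move: hno; rewrite negb_exists => /forallP /(_ i); rewrite negb_exists => /forallP /(_ j).
by rewrite negbK [RHS]mxE => /eqP.
Qed.

Lemma pos_comb m (c : 'rV[R]_m) (f : 'I_m -> R) : (forall i, 0 <= c 0 i) -> c != 0 ->
  (forall i, 0 < f i) -> 0 < \sum_i c 0 i * f i.
Proof.
move=> cge cnz hf; have [i0 [j hj]] := nz_entry cnz; rewrite ord1 in hj.
rewrite (bigD1 j) //=; apply: ltr_pwDl.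
  by apply: mulr_gt0 => //; rewrite lt0r hj cge.
by apply: sumr_ge0 => i _; apply: mulr_ge0 => //; apply: ltW.
Qed.

Lemma closure_Pk m n k (G : 'M[R]_(m, n)) :
  pointed_gens G -> (1 <= k <= n)%N -> forall A : 'M[R]_(k, n), row_free A ->
  Gr_closure (Pk_max G) A -> Pk G A.
Proof.
move=> [l hl] hk A hA hcl.
case: (gordan_mx (G *m cokermx A)) => [[z hz]|[c [cge [cnz cH]]]]; last first.
  exists (c *m G); split.
    apply/negP => /eqP h0.
    have := pos_comb cge cnz (f := fun i => (G *m l) i 0) (fun i => ltac:(rewrite /= -rowGl; exact: hl i)).
    by rewrite -cone_sum h0 mul0mx mxE ltxx.
  split; first by exists c.
  by rewrite submxE -mulmxA cH.
exfalso.
pose w := cokermx A *m z.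
have Aw : A *m w = 0 by rewrite mulmxA mulmx_coker mul0mx.
have hGw : forall i, 0 < (G *m w) i 0 by move=> i; rewrite mulmxA.
have [Ap hAp] := row_freeP hA.
have [mu [mu0 hmu]] := pos_lb hGw.
pose K0 : R := (k * n)%:R.
have K0pos : 0 < K0 by rewrite ltr0n muln_gt0; case/andP: hk => h1 h2; rewrite h1 (leq_trans h1 h2).
have [e1 [e1p he1]] := @small_pos (K0 * Sn Ap * 2) 1
  ltac:(by apply: mulr_ge0 => //; apply: mulr_ge0; [apply: ltW | apply: Sn_ge0]) ltr01.
have [e2 [e2p he2]] := @small_pos (2 * Sn (G *m Ap) * Sn w * K0) mu
  ltac:(by apply: mulr_ge0; [apply: mulr_ge0; [apply: mulr_ge0; [lra|apply: Sn_ge0]|apply: Sn_ge0]|apply: ltW]) mu0.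
pose e := Num.min e1 e2.
have ep : 0 < e by rewrite lt_min e1p e2p.
have ee1 : e <= e1 by rewrite ge_min lexx.
have ee2 : e <= e2 by rewrite ge_min lexx orbT.
have [B [hB [hPk hAB]]] := hcl e ep.
case: hPk => [[x [xnz [[c' [c'ge xc']] xB]]] _].
pose d := Sn (A - B).
have d0 : 0 <= d by apply: Sn_ge0.
have dK : d <= K0 * e.
  by apply: Sn_bound => i j; rewrite mxE; apply: ltW; rewrite mxE; apply: hAB.
have [beta xbeta] := submxP xB.
have hbeta : beta = x *m Ap + beta *m (A - B) *m Ap.
  rewrite -mulmxDl mulmxBr addrC xbeta subrK -mulmxA hAp mulmx1 //.
have Sbeta : Sn beta <= 2 * Sn (x *m Ap).
  have h1 := Sn_add (x *m Ap) (beta *m (A - B) *m Ap); rewrite -hbeta in h1.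
  have h2 : Sn (beta *m (A - B) *m Ap) <= Sn beta * d * Sn Ap.
    apply: (le_trans (Sn_mul _ _)); apply: ler_wpM2r; first exact: Sn_ge0.
    exact: Sn_mul.
  have h3 : d * Sn Ap * 2 <= 1.
    apply: ltW; apply: le_lt_trans he1; rewrite !mulrA; apply: ler_wpM2r => //.
    apply: ler_wpM2r; first exact: Sn_ge0.
    apply: (le_trans dK); rewrite mulrC; apply: ler_wpM2r => //; exact: ltW.
  have h4 := Sn_ge0 beta; have h5 := Sn_ge0 Ap.
  have h6 : Sn beta * d * Sn Ap * 2 <= Sn beta.
    by rewrite -!mulrA -[X in _ <= X]mulr1; apply: ler_wpM2l => //; rewrite !mulrA.
  lra.
have xw : x *m w = beta *m (B - A) *m w.
  by rewrite xbeta -!mulmxA mulmxBl Aw subr0.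
pose sigma := \sum_i c' 0 i.
have sig0 : 0 < sigma.
  rewrite lt0r sumr_ge0 // andbT; apply/negP => /eqP /psumr_eq0P hs.
  move/negP: xnz; apply; rewrite xc'; apply/eqP.
  have -> : c' = 0 by apply/matrixP => i j; rewrite ord1 mxE hs.
  by rewrite mul0mx.
have lower : mu * sigma <= (x *m w) 0 0.
  rewrite xc' cone_sum /sigma mulr_sumr; apply: ler_sum => i _.
  by rewrite mulrC; apply: ler_wpM2l.
have upper : (x *m w) 0 0 <= 2 * sigma * Sn (G *m Ap) * d * Sn w.
  apply: (le_trans (ler_norm _)); apply: (le_trans (Sn_entry _ 0 0)).
  rewrite xw; apply: (le_trans (Sn_mul _ _)); apply: ler_wpM2r; first exact: Sn_ge0.
  apply: (le_trans (Sn_mul _ _)); rewrite Sn_sub -/d; apply: ler_wpM2r => //.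
  apply: (le_trans Sbeta); rewrite -mulrA; apply: ler_wpM2l => //.
  rewrite xc' -mulmxA; apply: (le_trans (Sn_mul _ _)); apply: ler_wpM2r; first exact: Sn_ge0.
  rewrite /Sn /sigma big_ord1; apply: ler_sum => i _; rewrite ger0_norm //.
have h7 : 2 * Sn (G *m Ap) * d * Sn w < mu.
  apply: le_lt_trans he2.
  have hS1 := Sn_ge0 (G *m Ap); have hS2 := Sn_ge0 w.
  apply: (@le_trans _ _ (2 * Sn (G *m Ap) * (K0 * e) * Sn w)).
    apply: ler_wpM2r => //; apply: ler_wpM2l => //; apply: mulr_ge0 => //; lra.
  have -> : 2 * Sn (G *m Ap) * (K0 * e) * Sn w = e * (2 * Sn (G *m Ap) * Sn w * K0) by ring.
  apply: ler_wpM2r => //; apply: mulr_ge0; [apply: mulr_ge0; [apply: mulr_ge0 => //; lra|by []]|exact: ltW].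
have : mu * sigma <= 2 * Sn (G *m Ap) * d * Sn w * sigma.
  apply: (le_trans lower); apply: (le_trans upper); rewrite le_eqVlt; apply/orP; left; apply/eqP; ring.
move=> h8; have h9 : mu <= 2 * Sn (G *m Ap) * d * Sn w by rewrite -(ler_pM2r sig0).
by rewrite leNgt h7 in h9.
Qed.

End Main.

Section Fwd.
Variable R : realType.

Definition MS m n (G : 'M[R]_(m, n)) (S : {set 'I_m}) : 'M[R]_(m, n) :=
  \matrix_(i, j) (if i \in S then G i j else 0).

Lemma row_MS m n (G : 'M[R]_(m, n)) (S : {set 'I_m}) i :
  row i (MS G S) = if i \in S then row i G else 0.
Proof. by apply/rowP => j; rewrite !mxE; case: (i \in S); rewrite ?mxE. Qed.

Lemma MS_w m n (G : 'M[R]_(m, n)) (w : 'cV[R]_n) (S : {set 'I_m}) :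
  (forall i, i \in S -> (G *m w) i 0 = 0) -> MS G S *m w = 0.
Proof.
move=> h; apply/matrixP => i j; rewrite ord1 [RHS]mxE.
case hi: (i \in S); last by rewrite mxE big1 // => l _; rewrite mxE hi mul0r.
by rewrite -(h i hi) !mxE; apply: eq_bigr => l _; rewrite mxE hi.
Qed.

Lemma in_cone_row m n (G : 'M[R]_(m, n)) i : in_cone G (row i G).
Proof. by exists 'e_i; split; [move=> j; rewrite mxE ler0n | rewrite rowE]. Qed.

Lemma in_cone0 m n (G : 'M[R]_(m, n)) : in_cone G 0.
Proof. by exists 0; split; [move=> j; rewrite mxE | rewrite mul0mx]. Qed.

Lemma entry_sub m n (X Y : 'M[R]_(m, n)) i j : (X - Y) i j = X i j - Y i j.
Proof. by rewrite !mxE. Qed.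

Lemma arith1 a n k : (a <= n - k.+1)%N -> (k.+1 <= n)%N -> (a.+1 + k <= n)%N.
Proof. lia. Qed.
Lemma arith2 n k : (n <= n - k.+1)%N -> (k.+1 <= n)%N -> False.
Proof. lia. Qed.
Lemma arith3 a k c : (a.+1 + k + c = a + k.+1)%N -> c = 0%N.
Proof. lia. Qed.

Lemma Pk_closure m n k (G : 'M[R]_(m, n)) :
  pointed_gens G -> full_dim G -> (1 <= k <= n)%N -> forall A : 'M[R]_(k, n), row_free A ->
  Pk G A -> Gr_closure (Pk_max G) A.
Proof.
move=> [l hl] hfull hk A hA [x [xnz [[c [cge xc]] xA]]] e he.
case: k A hA xA hk => [|k'] A hA xA hk; first by [].
have [alpha xalpha] := submxP xA.
have anz : alpha != 0 by apply: contra xnz => /eqP a0; rewrite xalpha a0 mul0mx.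
have [D0 [_ hD0]] := @trans_gen R k'.+1 unit predT (fun _ => <<alpha>>%MS) k'
  (fun _ _ => ltac:(by rewrite genmxE rank_rV anz)) 0 1 ltr01.
pose T : 'M[R]_(k'.+1) := col_mx alpha D0.
have Tunit : T \in unitmx.
  rewrite -row_free_unit /row_free; apply/eqP.
  have e1 : \rank (col_mx alpha D0) = \rank (alpha + D0)%MS by rewrite addsmxE.
  transitivity (\rank (alpha + D0)%MS); first exact: e1.
  transitivity (\rank (<<alpha>> + D0)%MS).
    by rewrite (adds_eqmx (genmxE alpha) (eqmx_refl D0)).
  by rewrite (hD0 tt isT) genmxE rank_rV anz.
pose Ti := invmx T.
have TA : T *m A = col_mx x (D0 *m A) by rewrite xalpha -mul_col_mx.
have [eps [eps0 heps]] := @small_pos R (Sn Ti) e (Sn_ge0 _) he.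
pose y : 'rV[R]_n := const_mx 1 *m G.
have eps2 : 0 < eps / 2 by rewrite divr_gt0.
have [t [t0 ht]] := @small_pos R (Sn y) (eps / 2) (Sn_ge0 _) eps2.
pose p := x + t *: y.
have cnz : c != 0 by apply: contra xnz => /eqP c0; rewrite xc c0 mul0mx.
have xl : 0 < (x *m l) 0 0.
  rewrite xc cone_sum; apply: pos_comb => // i; rewrite -rowGl; exact: hl.
have yl : 0 <= (y *m l) 0 0.
  rewrite cone_sum; apply: sumr_ge0 => i _; rewrite mxE mul1r -rowGl; exact: ltW.
have pl : 0 < (p *m l) 0 0.
  have -> : (p *m l) 0 0 = (x *m l) 0 0 + t * (y *m l) 0 0.
    by rewrite /p mulmxDl -scalemxAl mxE [X in _ + X]mxE.
  have := mulr_ge0 (ltW t0) yl; lra.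
have pnz : p != 0 by apply: contraTneq pl => ->; rewrite mul0mx mxE ltxx.
have pcone : in_cone G p.
  exists (c + t *: const_mx 1); split.
    by move=> i; rewrite !mxE; apply: addr_ge0 => //; rewrite mulr1 ltW.
  by rewrite /p /y mulmxDl -scalemxAl -xc.
pose FamOK (S : {set 'I_m}) := (\rank (MS G S) <= n - k'.+1)%N && ~~ (p <= MS G S)%MS.
have hfam : forall S, FamOK S -> (\rank (MS G S + p)%MS + k' <= n)%N.
  move=> S /andP [h1 h2]; rewrite rank_adds_row //; case/andP: hk => _ hkn; exact: arith1.
have [D [hD rD]] := @trans_gen R n _ FamOK (fun S => (MS G S + p)%MS) k' hfam (D0 *m A) (eps / 2) eps2.
pose B' : 'M[R]_(1 + k', n) := col_mx p D.
pose B : 'M[R]_(k'.+1, n) := Ti *m B'.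
have BB' : (B :=: B')%MS by apply: eqmxMfull; rewrite row_full_unit unitmx_inv.
have MS0 : MS G set0 = 0 by apply/matrixP => i j; rewrite !mxE inE.
have fam0 : FamOK set0.
  rewrite /FamOK MS0 mxrank0 leq0n; apply/negP => /submxP [b hb].
  by move/eqP: pnz; apply; rewrite hb mulmx0.
have rB' : \rank (p + D)%MS = k'.+1.
  have := rD set0 fam0; rewrite MS0.
  have E1 : (((0 : 'M[R]_(m, n)) + p) + D :=: p + D)%MS := adds_eqmx (@adds0mx _ m 1 n p) (eqmx_refl D).
  by rewrite E1 (@adds0mx _ m 1 n p) rank_rV pnz.
have rankB : \rank B = k'.+1 by rewrite BB' /B' -addsmxE rB'.
exists B; split; first by rewrite /row_free rankB.
split; last first.
  move=> i j.
  have hSn : Sn (B - A) < e.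
    have E : B - A = Ti *m (B' - T *m A) by rewrite mulmxBr mulmxA mulVmx // mul1mx.
    rewrite E; apply: le_lt_trans (Sn_mul _ _) _.
    have hB' : Sn (B' - T *m A) < eps.
      rewrite TA /B' Sn_col_split col_mxKu col_mxKd /p [x + _]addrC addrK Sn_scale ger0_norm ?(ltW t0) //.
      lra.
    apply: le_lt_trans heps; rewrite mulrC; apply: ler_wpM2r; [exact: Sn_ge0 | exact: ltW].
  have := Sn_entry (B - A) i j; rewrite entry_sub distrC => h; exact: le_lt_trans h hSn.
split.
  exists p; split => //; split => //.
  by rewrite BB' /B' -addsmxE addsmxSl.
move=> w hw hdim [x' [x'nz [[[c'' [c''ge x'c]] x'w] x'B]]].
pose S := [set i | (G *m w) i 0 == 0].
have Gw0 : forall i, 0 <= (G *m w) i 0 by move=> i; rewrite -rowGl; exact: hw i.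
have MSw : MS G S *m w = 0 by apply: MS_w => i; rewrite inE => /eqP.
have rS : (\rank (MS G S) <= n - k'.+1)%N.
  apply: (hdim _ (rowsub (maxrankfun (MS G S)) (MS G S))); first exact: maxrowsub_free.
  move=> i; rewrite row_rowsub row_MS; case: ifP => hi.
    split; first exact: in_cone_row.
    by rewrite rowGl; apply/eqP; rewrite inE in hi.
  by split; [exact: in_cone0 | rewrite mul0mx mxE].
have [i0 hi0] : exists i, i \notin S.
  case: (boolP [exists i, i \notin S]) => [/existsP [i hi]|hno]; first by exists i.
  exfalso; have hG : MS G S = G.
    apply/matrixP => i j; rewrite mxE.
    by move: hno; rewrite negb_exists => /forallP /(_ i); rewrite negbK => ->.
  by move: rS; rewrite hG hfull; case/andP: hk => h1 h2; move=> h; exact: arith2 h h2.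
have pS : ~~ (p <= MS G S)%MS.
  apply/negP => /submxP [bb pb].
  have hp0 : (p *m w) 0 0 = 0 by rewrite pb -mulmxA MSw mulmx0 mxE.
  have xw0 : 0 <= (x *m w) 0 0.
    by rewrite xc cone_sum; apply: sumr_ge0 => i _; apply: mulr_ge0.
  have yw0 : 0 < (y *m w) 0 0.
    rewrite cone_sum (bigD1 i0) //= mxE mul1r; apply: ltr_pwDl.
      by rewrite lt0r Gw0 andbT; rewrite inE in hi0.
    by apply: sumr_ge0 => i _; rewrite mxE mul1r.
  have E2 : (p *m w) 0 0 = (x *m w) 0 0 + t * (y *m w) 0 0.
    by rewrite /p mulmxDl -scalemxAl mxE [X in _ + X]mxE.
  have := mulr_gt0 t0 yw0; lra.
have famS : FamOK S by rewrite /FamOK rS pS.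
have x'S : (x' <= MS G S)%MS.
  have hsum : \sum_i c'' 0 i * (G *m w) i 0 = 0 by rewrite -cone_sum -x'c.
  have := psumr_eq0P (fun i _ => mulr_ge0 (c''ge i) (Gw0 i)) hsum => hz.
  apply/submxP; exists c''; rewrite x'c; apply/matrixP => a j; rewrite !mxE.
  apply: eq_bigr => i _; rewrite mxE; case: ifP => // hi.
  have := hz i isT; rewrite ord1 => /eqP; rewrite mulf_eq0 => /orP [/eqP ->|]; first by rewrite !mul0r.
  by move=> h; move: hi; rewrite inE h.
have x'D : (x' <= p + D)%MS by rewrite addsmxE -/B' -BB'.
have := mxrank_sum_cap (MS G S) (p + D)%MS.
rewrite addsmxA rD // rank_adds_row // rB' => hr.
have : \rank (MS G S :&: (p + D))%MS = 0%N by apply: arith3 hr.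
move/eqP; rewrite mxrank_eq0 => /eqP hcap.
by move/negP: x'nz; apply; rewrite -submx0 -hcap sub_capmx x'S x'D.
Qed.

End Fwd.

Unset Implicit Arguments. Set Strict Implicit.

Theorem proposition3p6 (R : realType) (m n k : nat) (G : 'M[R]_(m, n)) :
  pointed_gens G -> full_dim G -> (1 <= k <= n)%N ->
  forall A : 'M[R]_(k, n), row_free A ->
    (Pk G A <-> Gr_closure (Pk_max G) A).
Proof.
move=> hp hf hk A hA; split.
  exact: Pk_closure.
exact: closure_Pk.
Qed.
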